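(* Let $\mathfrak{A}$ and $\mathfrak{B}$ be weakly Connes amenable dual Banach algebras such that $\mathfrak{A}^2$ is $w^*$-dense in $\mathfrak{A}$ and $\mathfrak{B}^2$ is $w^*$-dense in $\mathfrak{B}$. Then the $\ell^1$-direct sum $\mathfrak{A}\oplus^1\mathfrak{B}$ is weakly Connes amenable.
   Context: A dual Banach algebra is a Banach algebra $\mathfrak{A}$ which is the dual of a Banach space $\mathfrak{A}_*$ and whose multiplication is separately $w^*$-continuous. $\mathfrak{A}^2$ denotes the linear span of the products $ab$, $a,b\in\mathfrak{A}$. $\mathfrak{A}\oplus^1\mathfrak{B}$ has norm $\|(a,b)\|=\|a\|+\|b\|$, coordinatewise operations, and predual $\mathfrak{A}_*\oplus^\infty\mathfrak{B}_*$ (with pairing $\langle(a,b),(\phi,\psi)\rangle=\langle a,\phi\rangle+\langle b,\psi\rangle$), which makes it a dual Banach algebra. A derivation $D:\mathfrak{C}\to F$ is a continuous linear map with $D(xy)=D(x)\cdot y+x\cdot D(y)$; inner if $D(x)=x\cdot f-f\cdot x$ for some $f\in F$. For a Banach bimodule $E$ over a dual Banach algebra $\mathfrak{C}$, $\sigma wc(E)$ is the set of $x\in E$ such that $c\mapsto c\cdot x$ and $c\mapsto x\cdot c$ are continuous from $(\mathfrak{C},w^* )$ to $(E,\sigma(E,E^* ))$; $j_{\mathfrak{C}}:\mathfrak{C}^*\to\sigma wc(\mathfrak{C})^*$ is the adjoint of the inclusion $\sigma wc(\mathfrak{C})\hookrightarrow\mathfrak{C}$. $\mathfrak{C}$ is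 weakly Connes amenable if for every derivation $D:\mathfrak{C}\to\mathfrak{C}^*$ such that $j_{\mathfrak{C}}\circ D:\mathfrak{C}\to\sigma wc(\mathfrak{C})^*$ is $w^*$-$w^*$ continuous, the derivation $j_{\mathfrak{C}}\circ D$ is inner. *)

(* Defs.v *)
(* abstract scalar field K : numFieldType; the theorem is
   instantiated with K = R[i] (complex numbers over a realType R). *)
From mathcomp Require Import all_boot all_order all_algebra.
Set Implicit Arguments. Unset Strict Implicit. Unset Printing Implicit Defensive.
Import Order.TTheory GRing.Theory Num.Theory.
Local Open Scope ring_scope.

Section Defs.
Variable K : numFieldType.

Definition is_norm (V : lmodType K) (n : V -> K) : Prop :=
  [/\ forall x, 0 <= n x,
      forall x, n x = 0 -> x = 0,
      forall (k : K) x, n (k *: x) = `|k| * n x &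
      forall x y, n (x + y) <= n x + n y].

Definition is_complete (V : lmodType K) (n : V -> K) : Prop :=
  forall u : nat -> V,
    (forall e, 0 < e -> exists N, forall p q, (N <= p)%N -> (N <= q)%N -> n (u p - u q) < e) ->
    exists l, forall e, 0 < e -> exists N, forall p, (N <= p)%N -> n (u p - l) < e.

Definition is_banach (V : lmodType K) (n : V -> K) : Prop :=
  is_norm n /\ is_complete n.

Definition is_cont_lin_on (V : lmodType K) (S : V -> Prop) (n : V -> K) (f : V -> K) : Prop :=
  (forall x y (k : K), S x -> S y -> f (x + k *: y) = f x + k * f y) /\
  exists M : K, forall x, S x -> `|f x| <= M * n x.

Definition is_cont_lin (V : lmodType K) (n : V -> K) (f : V -> K) : Prop :=
  is_cont_lin_on (fun _ => True) n f.

(* U is open in the weak (initial) topology on X induced by the family of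
   scalar functions (F i)_{i : I}, i.e. sigma(X, {F i}). *)
Definition weak_open (X I : Type) (F : I -> X -> K) (U : X -> Prop) : Prop :=
  forall x, U x -> exists (m : nat) (s : 'I_m -> I) (e : K), 0 < e /\
    forall y, (forall j, `|F (s j) y - F (s j) x| < e) -> U y.

Definition weak_cont (X Y I J : Type) (F : I -> X -> K) (G : J -> Y -> K)
  (f : X -> Y) : Prop :=
  forall U : Y -> Prop, weak_open G U -> weak_open F (fun x => U (f x)).

Section DBA.
Variables (A P : lmodType K) (nA : A -> K) (mul : A -> A -> A)
          (nP : P -> K) (pair : A -> P -> K).

Definition is_banach_algebra : Prop :=
  [/\ is_banach nA,
      forall a b c (k : K), mul (a + k *: b) c = mul a c + k *: mul b c,
      forall a b c (k : K), mul a (b + k *: c) = mul a b + k *: mul a c,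
      forall a b c, mul a (mul b c) = mul (mul a b) c &
      forall a b, nA (mul a b) <= nA a * nA b].

(* the w*-topology on A = (P)^*: sigma(A, P) *)
Definition wstar : P -> A -> K := fun phi a => pair a phi.

Definition is_dual_via : Prop :=
  [/\ is_banach nP,
      forall a b phi (k : K), pair (a + k *: b) phi = pair a phi + k * pair b phi,
      forall a phi psi (k : K), pair a (phi + k *: psi) = pair a phi + k * pair a psi,
      (* isometry: nA a = sup_{nP phi <= 1} |pair a phi| *)
      (forall a phi, `|pair a phi| <= nA a * nP phi) /\
      (forall a e, 0 < e -> exists phi, nP phi <= 1 /\ nA a - e < `|pair a phi|) &
      forall f : P -> K, is_cont_lin nP f -> exists a, forall phi, pair a phi = f phi].

Definition is_dual_banach_algebra : Prop :=
  [/\ is_banach_algebra, is_dual_via &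
      forall a, weak_cont wstar wstar (mul a) /\
                weak_cont wstar wstar (fun b => mul b a)].

(* the weak topology sigma(A, A^* ) *)
Definition weakA : {f : A -> K | is_cont_lin nA f} -> A -> K :=
  fun f x => sval f x.

Definition sigma_wc (x : A) : Prop :=
  weak_cont wstar weakA (fun c => mul c x) /\ weak_cont wstar weakA (fun c => mul x c).

Definition jA (f : A -> K) : {x : A | sigma_wc x} -> K := fun x => f (sval x).

(* weak* topology on sigma wc(A)^* *)
Definition wstar_swc : {x : A | sigma_wc x} -> ({x : A | sigma_wc x} -> K) -> K :=
  fun x g => g x.

(* D : A -> A^* (elements of A^* represented as functions A -> K) is a
   (continuous) derivation; module actions on A^*:
   (f . c)(z) = f (c z), (c . f)(z) = f (z c). *)
Definition is_derivation_dual (D : A -> A -> K) : Prop :=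
  [/\ forall c, is_cont_lin nA (D c),
      forall c c' (k : K) x, D (c + k *: c') x = D c x + k * D c' x,
      exists M : K, forall c x, `|D c x| <= M * nA c * nA x &
      forall c c' x, D (mul c c') x = D c (mul c' x) + D c' (mul x c)].

Definition weakly_connes_amenable : Prop :=
  is_dual_banach_algebra /\
  forall D : A -> A -> K, is_derivation_dual D ->
    weak_cont wstar wstar_swc (fun c => jA (D c)) ->
    (* j_A o D is inner: j_A(D c) = c . g - g . c for some g in sigma wc(A)^*
       (g represented by any function on A whose restriction is that element) *)
    exists g : A -> K, is_cont_lin_on sigma_wc nA g /\
      forall c x, sigma_wc x -> D c x = g (mul x c) - g (mul c x).

Definition square_wstar_dense : Prop :=
  forall (U : A -> Prop) a, weak_open wstar U -> U a ->
    exists (m : nat) (f g : 'I_m -> A), U (\sum_(i < m) mul (f i) (g i)).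

End DBA.
End Defs.

(* Main.v *)
Require Import Defs.
From mathcomp Require Import all_boot all_order all_algebra.
From mathcomp Require Import reals complex.
Import Order.TTheory GRing.Theory Num.Theory.
Local Open Scope ring_scope.
Set Implicit Arguments. Unset Strict Implicit. Unset Printing Implicit Defensive.

Definition ord0_elim (T : Type) (j : 'I_0) : T :=
  match (etrans (esym (ltn_ord j)) (ltn0 j)) in _ = b return (if b then (unit:Type) else T) with erefl => tt end.

Section Topo.
Variable K : numFieldType.
Variables (X I : Type) (F : I -> X -> K).

Definition nbhd (x : X) (P : X -> Prop) : Prop :=
  exists m (s : 'I_m -> I) (e : K), 0 < e /\
    forall y, (forall j, `|F (s j) y - F (s j) x| < e) -> P y.

Lemma nbhd_mono {x} {P Q : X -> Prop} : nbhd x P -> (forall y, P y -> Q y) -> nbhd x Q.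
Proof. move=> [m [s [e [e0 H]]]] PQ; exists m, s, e; split => // y /H; exact: PQ. Qed.

Lemma nbhdT x : nbhd x (fun _ => True).
Proof. by exists 0%N, (@ord0_elim I), 1. Qed.

Lemma nbhd_self x P : nbhd x P -> P x.
Proof. by case=> [m [s [e [e0 H]]]]; apply: H => j; rewrite subrr normr0. Qed.

Lemma real_min_cases (d1 d2 : K) : 0 < d1 -> 0 < d2 ->
  exists d, [/\ 0 < d, d <= d1 & d <= d2].
Proof.
move=> h1 h2; case/orP: (real_leVge (gtr0_real h1) (gtr0_real h2)) => h.
  by exists d1; rewrite h1 lexx h.
by exists d2; rewrite h2 lexx h.
Qed.

Lemma nbhd_and {x P Q} : nbhd x P -> nbhd x Q -> nbhd x (fun y => P y /\ Q y).
Proof.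
case=> [m1 [s1 [e1 [e10 H1]]]] [m2 [s2 [e2 [e20 H2]]]].
have [d [d0 d1 d2]] := real_min_cases e10 e20.
exists (m1 + m2)%N, (fun k => match split k with inl a => s1 a | inr b => s2 b end), d.
split => // y Hy; split.
  apply: H1 => j; have := Hy (unsplit (inl j)); rewrite unsplitK => h.
  exact: lt_le_trans h d1.
apply: H2 => j; have := Hy (unsplit (inr j)); rewrite unsplitK => h.
exact: lt_le_trans h d2.
Qed.

Lemma nbhd_big {x m} {P : 'I_m -> X -> Prop} : (forall j, nbhd x (P j)) ->
  nbhd x (fun y => forall j, P j y).
Proof.
move=> HP.
have: forall n, (n <= m)%N -> nbhd x (fun y => forall j : 'I_m, (j < n)%N -> P j y).
  elim=> [_|n IH lenm].
    refine (nbhd_mono (nbhdT x) _) => y _ j; by rewrite ltn0.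
  refine (nbhd_mono (nbhd_and (IH (ltnW lenm)) (HP (Ordinal lenm))) _) => y [h1 h2] j.
  rewrite ltnS leq_eqVlt => /orP [/eqP ejn|]; last exact: h1.
  by have -> : j = Ordinal lenm by apply: val_inj.
by move/(_ m (leqnn m)) => nb; refine (nbhd_mono nb _) => y H j; apply: H.
Qed.

Definition cont_at (h : X -> K) x :=
  forall e, 0 < e -> nbhd x (fun y => `|h y - h x| < e).

Lemma cont_at_add h1 h2 x : cont_at h1 x -> cont_at h2 x ->
  cont_at (fun y => h1 y + h2 y) x.
Proof.
move=> c1 c2 e e0.
have e20 : 0 < e / 2 by rewrite divr_gt0 // ltr0n.
refine (nbhd_mono (nbhd_and (c1 _ e20) (c2 _ e20)) _) => y [l1 l2].
rewrite [e]splitr; apply: le_lt_trans (ltrD l1 l2).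
have -> : h1 y + h2 y - (h1 x + h2 x) = (h1 y - h1 x) + (h2 y - h2 x) by rewrite opprD addrACA.
exact: ler_normD.
Qed.

Lemma cont_at_const (c : K) x : cont_at (fun _ => c) x.
Proof. by move=> e e0; refine (nbhd_mono (nbhdT x) _) => y _; rewrite subrr normr0. Qed.

End Topo.

Section Topo2.
Variable K : numFieldType.

Lemma basic_open (Y J : Type) (G : J -> Y -> K) j y0 (e : K) :
  weak_open G (fun z => `|G j z - G j y0| < e).
Proof.
move=> z hz; exists 1%N, (fun _ => j), (e - `|G j z - G j y0|).
rewrite subr_gt0; split => // y /(_ ord0) h.
rewrite -(subrK (G j z) (G j y)) -addrA.
apply: le_lt_trans (ler_normD _ _) _.
by rewrite -ltrBrDr.
Qed.

Lemma weak_contP (X Y I J : Type) (F : I -> X -> K) (G : J -> Y -> K) (f : X -> Y) :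
  weak_cont F G f <-> (forall j x, cont_at F (fun y => G j (f y)) x).
Proof.
split.
  move=> wc j x e e0.
  have := wc _ (@basic_open _ _ G j (f x) e) x; rewrite subrr normr0; apply => //.
move=> H U oU x Ufx.
have [m [s [e [e0 He]]]] := oU _ Ufx.
by refine (nbhd_mono (nbhd_big (fun k => H (s k) x e e0)) _) => y Hy; apply: He.
Qed.

Lemma cont_at_comp (X Y I J : Type) (F : I -> X -> K) (G : J -> Y -> K)
  (f : X -> Y) (h : Y -> K) x :
  (forall j, cont_at F (fun y => G j (f y)) x) -> cont_at G h (f x) ->
  cont_at F (fun y => h (f y)) x.
Proof.
move=> Hf Hh e e0.
have [m [s [d [d0 Hd]]]] := Hh e e0.
by refine (nbhd_mono (nbhd_big (fun k => Hf (s k) d d0)) _) => y Hy; apply: Hd.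
Qed.

End Topo2.

Section Basics.
Variable K : numFieldType.

Lemma linf0 (V : lmodType K) (f : V -> K) :
  (forall x y (k : K), f (x + k *: y) = f x + k * f y) -> f 0 = 0.
Proof.
move=> H; have h := H 0 0 1; rewrite scale1r addr0 mul1r in h.
by apply: (addrI (f 0)); rewrite addr0 -h.
Qed.

Lemma linfD (V : lmodType K) (f : V -> K) :
  (forall x y (k : K), f (x + k *: y) = f x + k * f y) -> forall x y, f (x + y) = f x + f y.
Proof. by move=> H x y; have := H x y 1; rewrite scale1r mul1r. Qed.

Lemma linfZ (V : lmodType K) (f : V -> K) :
  (forall x y (k : K), f (x + k *: y) = f x + k * f y) -> forall k y, f (k *: y) = k * f y.
Proof. by move=> H k y; have := H 0 y k; rewrite add0r (linf0 H) add0r. Qed.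

Lemma linV0 (V W : lmodType K) (g : V -> W) :
  (forall x y (k : K), g (x + k *: y) = g x + k *: g y) -> g 0 = 0.
Proof.
move=> H; have h := H 0 0 1; rewrite scale1r addr0 scale1r in h.
by apply: (addrI (g 0)); rewrite addr0 -h.
Qed.

Lemma norm0 (V : lmodType K) (n : V -> K) : is_norm n -> n 0 = 0.
Proof. by case=> _ _ hs _; have := hs 0 0; rewrite scale0r normr0 mul0r. Qed.

Lemma max_cases (a b : K) : 0 <= a -> 0 <= b ->
  (Num.max a b = a /\ b <= a) \/ (Num.max a b = b /\ a <= b).
Proof.
move=> a0 b0; case: (real_leP (ger0_real a0) (ger0_real b0)) => h.
  by right.
by left; split => //; apply: ltW.
Qed.

Lemma le_maxl (a b : K) : 0 <= a -> 0 <= b -> a <= Num.max a b.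
Proof. by move=> a0 b0; case: (max_cases a0 b0) => [[-> _]|[-> h]]. Qed.

Lemma le_maxr (a b : K) : 0 <= a -> 0 <= b -> b <= Num.max a b.
Proof. by move=> a0 b0; case: (max_cases a0 b0) => [[-> h]|[-> _]]. Qed.

Lemma max_ge0 (a b : K) : 0 <= a -> 0 <= b -> 0 <= Num.max a b.
Proof. by move=> a0 b0; case: (max_cases a0 b0) => [[-> _]|[-> _]]. Qed.

Lemma max_le (a b c : K) : 0 <= a -> 0 <= b -> a <= c -> b <= c -> Num.max a b <= c.
Proof. by move=> a0 b0 ha hb; case: (max_cases a0 b0) => [[-> _]|[-> _]]. Qed.

Lemma max_lt (a b c : K) : 0 <= a -> 0 <= b -> a < c -> b < c -> Num.max a b < c.
Proof. by move=> a0 b0 ha hb; case: (max_cases a0 b0) => [[-> _]|[-> _]]. Qed.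

Lemma max_0 (a : K) : 0 <= a -> Num.max a 0 = a.
Proof. by move=> a0; case: (max_cases a0 (lexx 0)) => [[-> _]|[-> h]] //; apply/eqP; rewrite eq_le h a0. Qed.

Lemma max_0l (a : K) : 0 <= a -> Num.max 0 a = a.
Proof. by move=> a0; case: (max_cases (lexx 0) a0) => [[-> h]|[-> _]] //; apply/eqP; rewrite eq_le h a0. Qed.

Lemma halfe_gt0 (e : K) : 0 < e -> 0 < e / 2.
Proof. by move=> e0; rewrite divr_gt0 // ltr0n. Qed.

Lemma lt_eps_0 (z : K) : (forall e, 0 < e -> `|z| < e) -> z = 0.
Proof.
move=> H; apply/eqP; apply/negP => /negP nz.
by have := H `|z|; rewrite normr_gt0 nz ltxx => /(_ isT).
Qed.

Lemma norm_bound_abs (M n f : K) : 0 <= n -> `|f| <= M * n -> `|f| <= `|M| * n.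
Proof.
move=> n0 h; apply: (le_trans h).
have h0 : 0 <= M * n := le_trans (normr_ge0 f) h.
by rewrite -{1}(ger0_norm h0) normrM (ger0_norm n0).
Qed.

End Basics.

Section ProdNorm.
Variable K : numFieldType.
Variables (A B : lmodType K) (nA : A -> K) (nB : B -> K).

Lemma pair_eq0 (x : A * B) : x.1 = 0 -> x.2 = 0 -> x = 0.
Proof. by case: x => a b /= -> ->. Qed.

Lemma banach_sum : is_banach nA -> is_banach nB ->
  is_banach (fun x : A * B => nA x.1 + nB x.2).
Proof.
move=> [[a0 ad aZ aT] aC] [[b0 bd bZ bT] bC]; split.
  split.
  - by move=> x; rewrite addr_ge0.
  - move=> x /eqP; rewrite paddr_eq0 // => /andP [/eqP h1 /eqP h2].
    by apply: pair_eq0; [apply: ad|apply: bd].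
  - by move=> k x /=; rewrite aZ bZ mulrDr.
  - move=> x y /=; rewrite addrACA; apply: lerD; [exact: aT|exact: bT].
move=> u Cu.
have [l1 Hl1] : exists l, _ := aC (fun p => (u p).1) (fun e e0 =>
  ltac:(have [N HN] := Cu e e0; exists N => p q hp hq;
        apply: le_lt_trans (HN p q hp hq); by rewrite /= lerDl)).
have [l2 Hl2] : exists l, _ := bC (fun p => (u p).2) (fun e e0 =>
  ltac:(have [N HN] := Cu e e0; exists N => p q hp hq;
        apply: le_lt_trans (HN p q hp hq); by rewrite /= lerDr)).
exists (l1, l2) => e e0.
have [N1 H1] := Hl1 _ (halfe_gt0 e0); have [N2 H2] := Hl2 _ (halfe_gt0 e0).
exists (maxn N1 N2) => p; rewrite geq_max => /andP [p1 p2] /=.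
by rewrite [e]splitr; apply: ltrD; [exact: H1|exact: H2].
Qed.

Lemma banach_max : is_banach nA -> is_banach nB ->
  is_banach (fun x : A * B => Num.max (nA x.1) (nB x.2)).
Proof.
move=> [[a0 ad aZ aT] aC] [[b0 bd bZ bT] bC]; split.
  split.
  - by move=> x; rewrite max_ge0.
  - move=> x h; apply: pair_eq0; [apply: ad|apply: bd]; apply/eqP; rewrite eq_le ?a0 ?b0 andbT -h.
      exact: le_maxl.
    exact: le_maxr.
  - move=> k x /=; rewrite aZ bZ.
    case: (max_cases (a0 x.1) (b0 x.2)) => [[-> h]|[-> h]].
      apply/eqP; rewrite eq_le max_le ?mulr_ge0 ?ler_wpM2l //=.
      by rewrite le_maxl ?mulr_ge0.
    apply/eqP; rewrite eq_le max_le ?mulr_ge0 ?ler_wpM2l //=.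
    by rewrite le_maxr ?mulr_ge0.
  - move=> x y /=; apply: max_le => //.
      apply: le_trans (aT _ _) _; apply: lerD; exact: le_maxl.
    apply: le_trans (bT _ _) _; apply: lerD; exact: le_maxr.
move=> u Cu.
have [l1 Hl1] : exists l, _ := aC (fun p => (u p).1) (fun e e0 =>
  ltac:(have [N HN] := Cu e e0; exists N => p q hp hq;
        apply: le_lt_trans (HN p q hp hq); exact: le_maxl)).
have [l2 Hl2] : exists l, _ := bC (fun p => (u p).2) (fun e e0 =>
  ltac:(have [N HN] := Cu e e0; exists N => p q hp hq;
        apply: le_lt_trans (HN p q hp hq); exact: le_maxr)).
exists (l1, l2) => e e0.
have [N1 H1] := Hl1 _ e0; have [N2 H2] := Hl2 _ e0.
exists (maxn N1 N2) => p; rewrite geq_max => /andP [p1 p2] /=.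
by apply: max_lt; [| |exact: H1|exact: H2].
Qed.

End ProdNorm.

Section ProdAlg.
Variable K : numFieldType.
Variables (A B : lmodType K) (nA : A -> K) (nB : B -> K) (mA : A -> A -> A) (mB : B -> B -> B).

Lemma BA_prod : is_banach_algebra nA mA -> is_banach_algebra nB mB ->
  is_banach_algebra (fun x : A * B => nA x.1 + nB x.2)
    (fun x y : A * B => (mA x.1 y.1, mB x.2 y.2)).
Proof.
move=> [aB aDl aDr aA aM] [bB bDl bDr bA bM]; split.
- exact: banach_sum.
- by move=> a b c k /=; rewrite aDl bDl.
- by move=> a b c k /=; rewrite aDr bDr.
- by move=> a b c /=; rewrite aA bA.
- move=> a b /=.
  have [[a0 _ _ _] _] := aB; have [[b0 _ _ _] _] := bB.
  apply: le_trans (lerD (aM _ _) (bM _ _)) _.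
  rewrite mulrDl !mulrDr -addrA lerD2l addrA lerDr.
  by rewrite addr_ge0 // mulr_ge0.
Qed.

End ProdAlg.

Section ProdDual.
Variable K : numFieldType.
Hypothesis phase : forall z : K, exists k, `|k| = 1 /\ k * z = `|z|.
Variables (A PA B PB : lmodType K) (nA : A -> K) (nPA : PA -> K) (pA : A -> PA -> K)
  (nB : B -> K) (nPB : PB -> K) (pB : B -> PB -> K).

Lemma split_pair (V W : lmodType K) (x : V * W) : x = (x.1, 0) + 1 *: (0, x.2).
Proof. by case: x => a b; rewrite scale1r; congr pair; rewrite /= ?addr0 ?add0r. Qed.

Lemma pair_lin1 (V W : lmodType K) (x y : V) (k : K) :
  (x + k *: y, 0) = (x, 0) + k *: (y, 0) :> V * W.
Proof. by congr pair; rewrite /= scaler0 addr0. Qed.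

Lemma pair_lin2 (V W : lmodType K) (x y : W) (k : K) :
  (0, x + k *: y) = (0, x) + k *: (0, y) :> V * W.
Proof. by congr pair; rewrite /= scaler0 addr0. Qed.

Lemma dual_prod : (forall x, 0 <= nA x) -> (forall x, 0 <= nB x) -> is_dual_via nA nPA pA -> is_dual_via nB nPB pB ->
  is_dual_via (fun x : A * B => nA x.1 + nB x.2)
    (fun p : PA * PB => Num.max (nPA p.1) (nPB p.2))
    (fun (x : A * B) (p : PA * PB) => pA x.1 p.1 + pB x.2 p.2).
Proof.
move=> hA0 hB0 [PAb aL aR [ai1 ai2] asurj] [PBb bL bR [bi1 bi2] bsurj].
have [[PA0 _ PAZ _] _] := PAb; have [[PB0 _ PBZ _] _] := PBb.
split.
- exact: banach_max.
- by move=> a b phi k /=; rewrite aL bL mulrDr addrACA.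
- by move=> a phi psi k /=; rewrite aR bR mulrDr addrACA.
- split.
    move=> a phi /=; apply: le_trans (ler_normD _ _) _; rewrite mulrDl.
    apply: lerD.
      apply: le_trans (ai1 _ _) _; apply: ler_wpM2l; last exact: le_maxl.
      exact: hA0.
    apply: le_trans (bi1 _ _) _; apply: ler_wpM2l; last exact: le_maxr.
    exact: hB0.
  move=> a e e0.
  have [phi [hphi1 hphi2]] := ai2 a.1 _ (halfe_gt0 e0).
  have [psi [hpsi1 hpsi2]] := bi2 a.2 _ (halfe_gt0 e0).
  have [kA [kA1 kAz]] := phase (pA a.1 phi).
  have [kB [kB1 kBz]] := phase (pB a.2 psi).
  exists (kA *: phi, kB *: psi) => /=; split.
    by rewrite PAZ PBZ kA1 kB1 !mul1r max_le.
  rewrite (linfZ (aR a.1)) (linfZ (bR a.2)) kAz kBz ger0_norm ?addr_ge0 //.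
  rewrite [e]splitr opprD addrACA; exact: ltrD.
move=> f [flin [M hM]].
have fl x y k : f (x + k *: y) = f x + k * f y by exact: flin.
have c1 : is_cont_lin nPA (fun phi => f (phi, 0)).
  split; first by move=> x y k _ _; rewrite (pair_lin1 PB) fl.
  by exists M => x _; apply: le_trans (hM (x, 0) I) _; rewrite /= (norm0 (proj1 PBb)) max_0.
have c2 : is_cont_lin nPB (fun phi => f (0, phi)).
  split; first by move=> x y k _ _; rewrite (pair_lin2 PA) fl.
  by exists M => x _; apply: le_trans (hM (0, x) I) _; rewrite /= (norm0 (proj1 PAb)) max_0l.
have [a1 h1] := asurj _ c1; have [a2 h2] := bsurj _ c2.
by exists (a1, a2) => phi /=; rewrite h1 h2 [in RHS](split_pair phi) fl mul1r.
Qed.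
End ProdDual.

Section Coord.
Variable K : numFieldType.
Lemma coord_cont (X I : Type) (F : I -> X -> K) j x : cont_at F (F j) x.
Proof.
move=> e e0; exists 1%N, (fun _ => j), e; split => // y; exact: (fun h => h ord0).
Qed.
End Coord.

Section ProdW.
Variable K : numFieldType.
Variables (A PA B PB : lmodType K) (pA : A -> PA -> K) (pB : B -> PB -> K).
Hypotheses (pA0 : forall a, pA a 0 = 0) (pB0 : forall b, pB b 0 = 0)
  (pA0' : forall phi, pA 0 phi = 0) (pB0' : forall phi, pB 0 phi = 0).

Let pS := fun (x : A * B) (p : PA * PB) => pA x.1 p.1 + pB x.2 p.2.

Lemma proj1_cont (h : A -> K) (x : A * B) :
  cont_at (wstar pA) h x.1 -> cont_at (wstar pS) (fun y => h y.1) x.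
Proof.
move=> hc; apply: (cont_at_comp (G := wstar pA) (f := fst)) => // j e e0.
exists 1%N, (fun _ => (j, 0)), e; split => // y /(_ ord0).
by rewrite /wstar /pS /= !pB0 !addr0.
Qed.

Lemma proj2_cont (h : B -> K) (x : A * B) :
  cont_at (wstar pB) h x.2 -> cont_at (wstar pS) (fun y => h y.2) x.
Proof.
move=> hc; apply: (cont_at_comp (G := wstar pB) (f := snd)) => // j e e0.
exists 1%N, (fun _ => (0, j)), e; split => // y /(_ ord0).
by rewrite /wstar /pS /= !pA0 !add0r.
Qed.

Lemma incl1_cont (h : A * B -> K) (x : A) :
  cont_at (wstar pS) h (x, 0) -> cont_at (wstar pA) (fun y => h (y, 0)) x.
Proof.
move=> hc; apply: (cont_at_comp (G := wstar pS) (f := fun y => (y, 0))) => // j.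
rewrite /wstar /pS /=.
move=> e e0; refine (nbhd_mono (coord_cont (wstar pA) j.1 x e0) _) => y.
by rewrite /wstar !pB0' !addr0.
Qed.

Lemma incl2_cont (h : A * B -> K) (x : B) :
  cont_at (wstar pS) h (0, x) -> cont_at (wstar pB) (fun y => h (0, y)) x.
Proof.
move=> hc; apply: (cont_at_comp (G := wstar pS) (f := fun y => (0, y))) => // j.
rewrite /wstar /pS /=.
move=> e e0; refine (nbhd_mono (coord_cont (wstar pB) j.2 x e0) _) => y.
by rewrite /wstar !pA0' !add0r.
Qed.

Variables (mA : A -> A -> A) (mB : B -> B -> B).

Lemma mod_cont_prod :
  (forall a, weak_cont (wstar pA) (wstar pA) (mA a) /\
             weak_cont (wstar pA) (wstar pA) (fun b => mA b a)) ->
  (forall a, weak_cont (wstar pB) (wstar pB) (mB a) /\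
             weak_cont (wstar pB) (wstar pB) (fun b => mB b a)) ->
  forall a : A * B,
    weak_cont (wstar pS) (wstar pS) (fun y : A * B => (mA a.1 y.1, mB a.2 y.2)) /\
    weak_cont (wstar pS) (wstar pS) (fun y : A * B => (mA y.1 a.1, mB y.2 a.2)).
Proof.
move=> HA HB a; have [la ra] := HA a.1; have [lb rb] := HB a.2.
move/weak_contP: la => la; move/weak_contP: ra => ra.
move/weak_contP: lb => lb; move/weak_contP: rb => rb.
split; apply/weak_contP => j x; rewrite /wstar /pS /=; apply: cont_at_add.
- exact: (proj1_cont (h := fun y => pA (mA a.1 y) j.1) (la j.1 x.1)).
- exact: (proj2_cont (h := fun y => pB (mB a.2 y) j.2) (lb j.2 x.2)).
- exact: (proj1_cont (h := fun y => pA (mA y a.1) j.1) (ra j.1 x.1)).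
- exact: (proj2_cont (h := fun y => pB (mB y a.2) j.2) (rb j.2 x.2)).
Qed.

End ProdW.

Section Gen.
Variable K : numFieldType.
Lemma cont_at_ext (X I : Type) (F : I -> X -> K) (h1 h2 : X -> K) x :
  (forall y, h1 y = h2 y) -> cont_at F h1 x -> cont_at F h2 x.
Proof.
move=> e c e' e0; refine (nbhd_mono (c e' e0) _) => y; by rewrite !e.
Qed.

Lemma cont_open (X I : Type) (F : I -> X -> K) (h : X -> K) a (e : K) :
  (forall y, cont_at F h y) -> weak_open F (fun z => `|h z - h a| < e).
Proof.
move=> hc y hy.
have e0 : 0 < e - `|h y - h a| by rewrite subr_gt0.
refine (nbhd_mono (hc y _ e0) _) => z hz.
rewrite -(subrK (h y) (h z)) -addrA; apply: le_lt_trans (ler_normD _ _) _.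
by rewrite -ltrBrDr.
Qed.
End Gen.

Section Facts.
Variable K : numFieldType.
Variables (A PA : lmodType K) (nA : A -> K) (nPA : PA -> K) (pA : A -> PA -> K)
  (mA : A -> A -> A).
Hypotheses (hA : is_dual_banach_algebra nA mA nPA pA).
Lemma factsA : [/\ forall x, 0 <= nA x, nA 0 = 0, (forall a, mA 0 a = 0),
  (forall a, mA a 0 = 0) & (forall a, pA a 0 = 0) /\ (forall phi, pA 0 phi = 0)].
Proof.
case: hA => [[[[n0 _ _ _] _] mDl mDr _ _] [_ pL pR _ _] _]; split => //.
- by apply: (@norm0 K A); case: hA => [[[]]].
- by move=> a; apply: (linV0 (g := fun b => mA b a)) => x y k; apply: mDl.
- by move=> a; apply: (linV0 (g := fun b => mA a b)) => x y k; apply: mDr.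
split => [a|phi]; first exact: (linf0 (pR a)).
exact: (linf0 (f := fun b => pA b phi)) => x y k; apply: pL.
Qed.

End Facts.

Section Main.
Variable K : numFieldType.
Variables (A PA B PB : lmodType K) (nA : A -> K) (nPA : PA -> K) (pA : A -> PA -> K)
  (mA : A -> A -> A) (nB : B -> K) (nPB : PB -> K) (pB : B -> PB -> K) (mB : B -> B -> B).
Hypotheses (hA : is_dual_banach_algebra nA mA nPA pA) (hB : is_dual_banach_algebra nB mB nPB pB).

Local Notation nS := (fun x : A * B => nA x.1 + nB x.2).
Local Notation mS := (fun x y : A * B => (mA x.1 y.1, mB x.2 y.2)).
Local Notation pS := (fun (x : A * B) (p : PA * PB) => pA x.1 p.1 + pB x.2 p.2).


Let FA := factsA hA.
Let FB := factsA hB.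
Let nA0 : forall x, 0 <= nA x. Proof. by case: FA. Qed.
Let nAz : nA 0 = 0. Proof. by case: FA. Qed.
Let mA0l : forall a, mA 0 a = 0. Proof. by case: FA. Qed.
Let mA0r : forall a, mA a 0 = 0. Proof. by case: FA. Qed.
Let pA0 : forall a, pA a 0 = 0. Proof. by case: FA => _ _ _ _ []. Qed.
Let pA0' : forall phi, pA 0 phi = 0. Proof. by case: FA => _ _ _ _ []. Qed.
Let nB0 : forall x, 0 <= nB x. Proof. by case: FB. Qed.
Let nBz : nB 0 = 0. Proof. by case: FB. Qed.
Let mB0l : forall a, mB 0 a = 0. Proof. by case: FB. Qed.
Let mB0r : forall a, mB a 0 = 0. Proof. by case: FB. Qed.
Let pB0 : forall a, pB a 0 = 0. Proof. by case: FB => _ _ _ _ []. Qed.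
Let pB0' : forall phi, pB 0 phi = 0. Proof. by case: FB => _ _ _ _ []. Qed.

Lemma lift1_cl (f : A * B -> K) : is_cont_lin nS f -> is_cont_lin nA (fun a => f (a, 0)).
Proof.
case=> fl [M hM]; split; first by move=> x y k _ _; rewrite (pair_lin1 B) fl.
by exists M => x _; apply: le_trans (hM (x, 0) I) _; rewrite /= nBz addr0.
Qed.

Lemma lift2_cl (f : A * B -> K) : is_cont_lin nS f -> is_cont_lin nB (fun b => f (0, b)).
Proof.
case=> fl [M hM]; split; first by move=> x y k _ _; rewrite (pair_lin2 A) fl.
by exists M => x _; apply: le_trans (hM (0, x) I) _; rewrite /= nAz add0r.
Qed.

Lemma ext1_cl (f : A -> K) : is_cont_lin nA f -> is_cont_lin nS (fun y => f y.1).
Proof.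
case=> fl [M hM]; split; first by move=> x y k _ _; rewrite /= fl.
exists `|M| => x _; apply: le_trans (norm_bound_abs (nA0 _) (hM x.1 I)) _.
by rewrite /= ler_wpM2l // lerDl.
Qed.

Lemma ext2_cl (f : B -> K) : is_cont_lin nB f -> is_cont_lin nS (fun y => f y.2).
Proof.
case=> fl [M hM]; split; first by move=> x y k _ _; rewrite /= fl.
exists `|M| => x _; apply: le_trans (norm_bound_abs (nB0 _) (hM x.2 I)) _.
by rewrite /= ler_wpM2l // lerDr.
Qed.

Lemma swcA_S x1 : sigma_wc nA mA pA x1 -> sigma_wc nS mS pS (x1, 0).
Proof.
case=> l r; move/weak_contP: l => l; move/weak_contP: r => r.
split; apply/weak_contP => f c.
  apply: (cont_at_ext (h1 := fun y => sval f (mA y.1 x1, 0))).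
    by move=> y; rewrite /weakA /= mB0r.
  exact: (proj1_cont pB0 (l (exist _ _ (lift1_cl (svalP f))) c.1)).
apply: (cont_at_ext (h1 := fun y => sval f (mA x1 y.1, 0))).
  by move=> y; rewrite /weakA /= mB0l.
exact: (proj1_cont pB0 (r (exist _ _ (lift1_cl (svalP f))) c.1)).
Qed.

Lemma swcB_S x2 : sigma_wc nB mB pB x2 -> sigma_wc nS mS pS (0, x2).
Proof.
case=> l r; move/weak_contP: l => l; move/weak_contP: r => r.
split; apply/weak_contP => f c.
  apply: (cont_at_ext (h1 := fun y => sval f (0, mB y.2 x2))).
    by move=> y; rewrite /weakA /= mA0r.
  exact: (proj2_cont pA0 (l (exist _ _ (lift2_cl (svalP f))) c.2)).
apply: (cont_at_ext (h1 := fun y => sval f (0, mB x2 y.2))).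
  by move=> y; rewrite /weakA /= mA0l.
exact: (proj2_cont pA0 (r (exist _ _ (lift2_cl (svalP f))) c.2)).
Qed.

Lemma swcS_A x : sigma_wc nS mS pS x -> sigma_wc nA mA pA x.1.
Proof.
case=> l r; move/weak_contP: l => l; move/weak_contP: r => r.
split; apply/weak_contP => f c.
  exact: (incl1_cont pB0' (l (exist _ _ (ext1_cl (svalP f))) (c, 0))).
exact: (incl1_cont pB0' (r (exist _ _ (ext1_cl (svalP f))) (c, 0))).
Qed.

Lemma swcS_B x : sigma_wc nS mS pS x -> sigma_wc nB mB pB x.2.
Proof.
case=> l r; move/weak_contP: l => l; move/weak_contP: r => r.
split; apply/weak_contP => f c.
  exact: (incl2_cont pA0' (l (exist _ _ (ext2_cl (svalP f))) (0, c))).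
exact: (incl2_cont pA0' (r (exist _ _ (ext2_cl (svalP f))) (0, c))).
Qed.

Section Der.
Hypotheses (dA : square_wstar_dense mA pA) (dB : square_wstar_dense mB pB).
Hypothesis hWA : forall D : A -> A -> K, is_derivation_dual nA mA D ->
    weak_cont (wstar pA) (@wstar_swc K A PA nA mA pA) (fun c => jA (D c)) ->
    exists g : A -> K, is_cont_lin_on (sigma_wc nA mA pA) nA g /\
      forall c x, sigma_wc nA mA pA x -> D c x = g (mA x c) - g (mA c x).
Hypothesis hWB : forall D : B -> B -> K, is_derivation_dual nB mB D ->
    weak_cont (wstar pB) (@wstar_swc K B PB nB mB pB) (fun c => jA (D c)) ->
    exists g : B -> K, is_cont_lin_on (sigma_wc nB mB pB) nB g /\
      forall c x, sigma_wc nB mB pB x -> D c x = g (mB x c) - g (mB c x).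
Variable D : A * B -> A * B -> K.
Hypothesis hD : is_derivation_dual nS mS D.
Hypothesis hc : weak_cont (wstar pS) (@wstar_swc K (A * B)%type (PA * PB)%type nS mS pS)
  (fun c => jA (D c)).

Let Dcont x : sigma_wc nS mS pS x -> forall c, cont_at (wstar pS) (fun c => D c x) c.
Proof. by move=> hx c; exact: ((weak_contP _ _ _).1 hc (exist _ x hx) c). Qed.

Let Dl c : forall x y k, D c (x + k *: y) = D c x + k * D c y.
Proof. by case: hD => cl _ _ _ x y k; case: (cl c) => h _; apply: h. Qed.

Let Dc0 c : D c (0, 0) = 0.
Proof. exact: (linf0 (Dl c)). Qed.

Let Dlin c c' k x : D (c + k *: c') x = D c x + k * D c' x.
Proof. by case: hD => _ h _ _; apply: h. Qed.

Let Dleib c c' x : D (mS c c') x = D c (mS c' x) + D c' (mS x c).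
Proof. by case: hD => _ _ _ h; apply: h. Qed.

Lemma DA_der : is_derivation_dual nA mA (fun c x => D (c, 0) (x, 0)).
Proof.
case: hD => cl lin [M hM] leib; split.
- move=> c; split; first by move=> x y k _ _; rewrite (pair_lin1 B) Dl.
  case: (cl (c, 0)) => _ [M' hM'].
  by exists M' => x _; apply: le_trans (hM' (x, 0) I) _; rewrite /= nBz addr0.
- by move=> c c' k x; rewrite (pair_lin1 B) Dlin.
- by exists M => c x; apply: le_trans (hM (c, 0) (x, 0)) _; rewrite /= nBz !addr0.
- move=> c c' x; have := Dleib (c, 0) (c', 0) (x, 0).
  by rewrite /= !mB0l.
Qed.

Lemma DB_der : is_derivation_dual nB mB (fun c x => D (0, c) (0, x)).
Proof.
case: hD => cl lin [M hM] leib; split.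
- move=> c; split; first by move=> x y k _ _; rewrite (pair_lin2 A) Dl.
  case: (cl (0, c)) => _ [M' hM'].
  by exists M' => x _; apply: le_trans (hM' (0, x) I) _; rewrite /= nAz add0r.
- by move=> c c' k x; rewrite (pair_lin2 A) Dlin.
- by exists M => c x; apply: le_trans (hM (0, c) (0, x)) _; rewrite /= nAz !add0r.
- move=> c c' x; have := Dleib (0, c) (0, c') (0, x).
  by rewrite /= !mA0l.
Qed.

Lemma DA_cont : weak_cont (wstar pA) (@wstar_swc K A PA nA mA pA)
  (fun c => jA (fun x => D (c, 0) (x, 0))).
Proof.
apply/weak_contP => j c.
exact: (incl1_cont pB0' (Dcont (swcA_S (svalP j)) (c, 0))).
Qed.

Lemma DB_cont : weak_cont (wstar pB) (@wstar_swc K B PB nB mB pB)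
  (fun c => jA (fun x => D (0, c) (0, x))).
Proof.
apply/weak_contP => j c.
exact: (incl2_cont pA0' (Dcont (swcB_S (svalP j)) (0, c))).
Qed.

Lemma crossA x2 : sigma_wc nB mB pB x2 -> forall a, D (a, 0) (0, x2) = 0.
Proof.
move=> hx a; pose h := fun a => D (a, 0) (0, x2).
have hcont y : cont_at (wstar pA) h y.
  exact: (incl1_cont pB0' (Dcont (swcB_S hx) (y, 0))).
have hadd a1 a2 : h (a1 + a2) = h a1 + h a2.
  rewrite /h; have := Dlin (a1, 0) (a2, 0) 1 (0, x2); rewrite scale1r mul1r => <-.
  by congr (D _ _); congr pair; rewrite /= addr0.
have h0 : h 0 = 0.
  by apply: (addrI (h 0)); rewrite -hadd !addr0.
have hprod a1 a2 : h (mA a1 a2) = 0.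
  rewrite /h; have := Dleib (a1, 0) (a2, 0) (0, x2).
  by rewrite /= !mB0l !mA0r !mA0l !mB0r !Dc0 addr0 => ->.
have hsum m (f g : 'I_m -> A) : h (\sum_(i < m) mA (f i) (g i)) = 0.
  by apply: (big_ind (fun s => h s = 0)) => // x y hx' hy'; rewrite hadd hx' hy' addr0.
apply: lt_eps_0 => e e0.
have Ua : (fun z => `|h z - h a| < e) a by rewrite /= subrr normr0.
have [m [f [g hU]]] := dA (cont_open (a:=a) (e:=e) hcont) Ua.
by move: hU; rewrite hsum sub0r normrN.
Qed.

Lemma crossB x1 : sigma_wc nA mA pA x1 -> forall b, D (0, b) (x1, 0) = 0.
Proof.
move=> hx b; pose h := fun b => D (0, b) (x1, 0).
have hcont y : cont_at (wstar pB) h y.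
  exact: (incl2_cont pA0' (Dcont (swcA_S hx) (0, y))).
have hadd a1 a2 : h (a1 + a2) = h a1 + h a2.
  rewrite /h; have := Dlin (0, a1) (0, a2) 1 (x1, 0); rewrite scale1r mul1r => <-.
  by congr (D _ _); congr pair; rewrite /= addr0.
have h0 : h 0 = 0.
  by apply: (addrI (h 0)); rewrite -hadd !addr0.
have hprod a1 a2 : h (mB a1 a2) = 0.
  rewrite /h; have := Dleib (0, a1) (0, a2) (x1, 0).
  by rewrite /= !mA0l !mB0r !mB0l !mA0r !Dc0 addr0 => ->.
have hsum m (f g : 'I_m -> B) : h (\sum_(i < m) mB (f i) (g i)) = 0.
  by apply: (big_ind (fun s => h s = 0)) => // x y hx' hy'; rewrite hadd hx' hy' addr0.
apply: lt_eps_0 => e e0.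
have Ua : (fun z => `|h z - h b| < e) b by rewrite /= subrr normr0.
have [m [f [g hU]]] := dB (cont_open (a:=b) (e:=e) hcont) Ua.
by move: hU; rewrite hsum sub0r normrN.
Qed.

Lemma inner_prod : exists g : A * B -> K, is_cont_lin_on (sigma_wc nS mS pS) nS g /\
      forall c x, sigma_wc nS mS pS x -> D c x = g (mS x c) - g (mS c x).
Proof.
have [gA [[gAl [MA hMA]] gAeq]] := hWA DA_der DA_cont.
have [gB [[gBl [MB hMB]] gBeq]] := hWB DB_der DB_cont.
exists (fun y => gA y.1 + gB y.2); split.
  split.
    move=> x y k sx sy /=.
    rewrite (gAl _ _ _ (swcS_A sx) (swcS_A sy)) (gBl _ _ _ (swcS_B sx) (swcS_B sy)).
    by rewrite mulrDr addrACA.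
  exists (`|MA| + `|MB|) => x sx /=.
  apply: le_trans (ler_normD _ _) _; rewrite mulrDr; apply: lerD.
    apply: le_trans (norm_bound_abs (nA0 _) (hMA _ (swcS_A sx))) _.
    by rewrite ler_wpM2r // lerDl.
  apply: le_trans (norm_bound_abs (nB0 _) (hMB _ (swcS_B sx))) _.
  by rewrite ler_wpM2r // lerDr.
move=> c x sx.
have -> : D c x = D (c.1, 0) x + D (0, c.2) x by rewrite {1}(split_pair c) Dlin mul1r.
have -> : D (c.1, 0) x = D (c.1, 0) (x.1, 0) + D (c.1, 0) (0, x.2).
  by rewrite {1}(split_pair x) Dl mul1r.
have -> : D (0, c.2) x = D (0, c.2) (x.1, 0) + D (0, c.2) (0, x.2).
  by rewrite {1}(split_pair x) Dl mul1r.
rewrite (crossA (swcS_B sx)) (crossB (swcS_A sx)) addr0 add0r.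
rewrite (gAeq c.1 x.1 (swcS_A sx)) (gBeq c.2 x.2 (swcS_B sx)) /=.
by rewrite opprD addrACA.
Qed.

End Der.
End Main.
Unset Implicit Arguments.

Lemma phaseC (C : numClosedFieldType) (z : C) : exists k, `|k| = 1 /\ k * z = `|z|.
Proof.
have [->|nz] := eqVneq z 0; first by exists 1; rewrite normr1 mulr0 normr0.
have nz' : `|z| != 0 by rewrite normr_eq0.
exists (z^* / `|z|); split.
  by rewrite normrM normfV normr_id norm_conjC divff.
by rewrite mulrAC -normCKC expr2 mulfK.
Qed.

Local Open Scope complex_scope.

Theorem theorem3p15 (R : realType)
  (A PA : lmodType R[i]) (nA : A -> R[i]) (mA : A -> A -> A)
  (nPA : PA -> R[i]) (pA : A -> PA -> R[i])
  (B PB : lmodType R[i]) (nB : B -> R[i]) (mB : B -> B -> B)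
  (nPB : PB -> R[i]) (pB : B -> PB -> R[i]) :
  weakly_connes_amenable nA mA nPA pA ->
  weakly_connes_amenable nB mB nPB pB ->
  square_wstar_dense mA pA ->
  square_wstar_dense mB pB ->
  weakly_connes_amenable
    (fun x : A * B => nA x.1 + nB x.2)
    (fun x y : A * B => (mA x.1 y.1, mB x.2 y.2))
    (fun p : PA * PB => Num.max (nPA p.1) (nPB p.2))
    (fun (x : A * B) (p : PA * PB) => pA x.1 p.1 + pB x.2 p.2).
Proof.
move=> [dbaA wA] [dbaB wB] dA dB.
have [nA0 _ _ _ [pA0 _]] := factsA dbaA.
have [nB0 _ _ _ [pB0 _]] := factsA dbaB.
case: (dbaA) => baA duA mcA; case: (dbaB) => baB duB mcB.
split.
  split.
  - exact: BA_prod.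
  - exact: (dual_prod (@phaseC _)).
  - exact: (mod_cont_prod pA0 pB0 mcA mcB).
move=> D hD hc; exact: (inner_prod dbaA dbaB dA dB wA wB hD hc).
Qed.
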